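(* Let $c>0$, $\lambda>0$ and define, for $t>0$ and $|x|<ct$, $$p(x,t)=\frac{\lambda\, I_0\!\left(\frac{\lambda}{c}\sqrt{c^2t^2-x^2}\right)}{2c\,\sinh \lambda t}.$$ Then for each $t>0$, $p(\cdot,t)$ is a probability density on $(-ct,ct)$ (i.e. $\int_{-ct}^{ct}p(x,t)\,dx=1$), and $p$ satisfies $$\frac{\partial^2 p}{\partial t^2}+2\lambda\coth(\lambda t)\,\frac{\partial p}{\partial t}= c^2 \frac{\partial^2 p}{\partial x^2}\qquad (t>0,\ |x|<ct).$$
   Context: $I_0(z)=\sum_{k\ge0}\frac{(z/2)^{2k}}{(k!)^2}$ is the modified Bessel function of the first kind of order $0$. *)

(* Defs.v *)
From Stdlib Require Import Reals Factorial ClassicalEpsilon.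
Open Scope R_scope.

Definition I0_partial (z : R) (n : nat) : R :=
  sum_f_R0 (fun k => (z / 2) ^ (2 * k) / (INR (fact k)) ^ 2) n.

(* I_0(z) = sum_{k>=0} (z/2)^{2k} / (k!)^2, defined as the limit of the
   partial sums (the series converges for every real z). *)
Definition I0 (z : R) : R :=
  epsilon (inhabits 0) (fun l => Un_cv (I0_partial z) l).

Definition coth (y : R) : R := cosh y / sinh y.

Definition p (c lam : R) (x t : R) : R :=
  lam * I0 (lam / c * sqrt (c ^ 2 * t ^ 2 - x ^ 2)) / (2 * c * sinh (lam * t)).

(* Main.v *)
From Coquelicot Require Import Coquelicot.
From Stdlib Require Import Reals Lra Lia Psatz Factorial ClassicalEpsilon.
Require Import Defs.
Open Scope R_scope.

Lemma lim_inv_S (M : R) : is_lim_seq (fun n => M * / INR (S n)) 0.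
Proof.
  replace (Finite 0) with (Rbar_mult M 0) by (simpl; f_equal; ring).
  apply is_lim_seq_scal_l.
  apply (is_lim_seq_incr_1 (fun n => / INR n)).
  replace (Finite 0) with (Rbar_inv p_infty) by reflexivity.
  apply is_lim_seq_inv. apply is_lim_seq_INR. discriminate.
Qed.

Lemma rad_inf (a : nat -> R) (M : R) :
  (forall n, a n <> 0) ->
  (forall n, Rabs (a (S n) / a n) <= M * / INR (S n)) ->
  CV_radius a = p_infty.
Proof.
  intros Hn Hb. apply CV_radius_infinite_DAlembert; auto.
  apply is_lim_seq_le_le with (u := fun _ => 0) (w := fun n => M * / INR (S n)).
  - intros n; split; [apply Rabs_pos| apply Hb].
  - apply is_lim_seq_const.
  - apply lim_inv_S.
Qed.

Definition Ac (al : R) (n : nat) : R := al ^ n / (INR (fact n)) ^ 2.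

Lemma INR_S_pos n : 0 < INR (S n).
Proof. apply lt_0_INR; lia. Qed.

Lemma fact_pos' n : 0 < INR (fact n).
Proof. apply INR_fact_lt_0. Qed.

Lemma Ac_S al n : Ac al (S n) = al / (INR (S n)) ^ 2 * Ac al n.
Proof.
  unfold Ac. rewrite fact_simpl, mult_INR. change (al ^ S n) with (al * al ^ n).
  pose proof (fact_pos' n). pose proof (INR_S_pos n).
  field. split; lra.
Qed.

Lemma Ac_pos al n : 0 < al -> 0 < Ac al n.
Proof.
  intros H. unfold Ac. pose proof (fact_pos' n).
  apply Rdiv_lt_0_compat; [apply pow_lt; auto| apply pow_lt; auto].
Qed.

Lemma Ac_rad al : 0 < al -> CV_radius (Ac al) = p_infty.
Proof.
  intros H. apply rad_inf with (M := al).
  - intros n; pose proof (Ac_pos al n H); lra.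
  - intros n. rewrite Ac_S. pose proof (Ac_pos al n H). pose proof (INR_S_pos n).
    assert (1 <= INR (S n)) by (apply (le_INR 1); lia).
    replace (al / INR (S n) ^ 2 * Ac al n / Ac al n) with (al / INR (S n) ^ 2) by (field; lra).
    rewrite Rabs_right.
    2:{ apply Rle_ge. apply Rlt_le. apply Rdiv_lt_0_compat; auto. apply pow_lt; auto. }
    unfold Rdiv. apply Rmult_le_compat_l; [lra|].
    apply Rinv_le_contravar; auto. replace (INR (S n) ^ 2) with (INR (S n) * INR (S n)) by ring; nra.
Qed.

Definition G al y := PSeries (Ac al) y.
Definition G1 al y := PSeries (PS_derive (Ac al)) y.
Definition G2 al y := PSeries (PS_derive (PS_derive (Ac al))) y.

Lemma G_der al y : 0 < al -> is_derive (G al) y (G1 al y).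
Proof. intros H. apply is_derive_PSeries. rewrite Ac_rad; simpl; auto. Qed.

Lemma G1_der al y : 0 < al -> is_derive (G1 al) y (G2 al y).
Proof. intros H. apply is_derive_PSeries. rewrite CV_radius_derive, Ac_rad; simpl; auto. Qed.

Lemma G_ode al y : 0 < al -> G1 al y + y * G2 al y = al * G al y.
Proof.
  intros H. unfold G1, G2, G.
  assert (R1 : Rbar_lt (Rabs y) (CV_radius (PS_derive (Ac al))))
    by (rewrite CV_radius_derive, Ac_rad; simpl; auto).
  assert (R2 : Rbar_lt (Rabs y) (CV_radius (PS_derive (PS_derive (Ac al)))))
    by (rewrite !CV_radius_derive, Ac_rad; simpl; auto).
  rewrite <- PSeries_incr_1, <- PSeries_plus, <- PSeries_scal.
  2: apply CV_radius_inside; auto.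
  2: apply ex_pseries_incr_1, CV_radius_inside; auto.
  apply PSeries_ext. intros n.
  destruct n as [|m].
  - change (INR 1 * Ac al 1 + 0 = al * Ac al 0).
    rewrite Ac_S. simpl INR. field.
  - change (INR (S (S m)) * Ac al (S (S m)) + INR (S m) * (INR (S (S m)) * Ac al (S (S m))) = al * Ac al (S m)).
    rewrite (Ac_S al (S m)).
    pose proof (INR_S_pos m). pose proof (INR_S_pos (S m)).
    rewrite (S_INR (S m)). field. rewrite <- S_INR. lra.
Qed.

Lemma ps_lim a x : ex_pseries a x ->
  is_lim_seq (fun N => sum_f_R0 (fun k => a k * x ^ k) N) (PSeries a x).
Proof.
  intros H. pose proof (PSeries_correct a x H) as H1.
  apply is_lim_seq_ext with (u := sum_n (fun k => scal (pow_n x k) (a k))).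
  - intros n. rewrite sum_n_Reals. apply sum_eq. intros i _.
    rewrite pow_n_pow. unfold scal; simpl; unfold mult; simpl. ring.
  - exact H1.
Qed.

Lemma sum_nonneg (f : nat -> R) N : (forall k, 0 <= f k) -> 0 <= sum_f_R0 f N.
Proof. intros H; induction N; simpl; [apply H| specialize (H (S N)); lra]. Qed.

Lemma ps_mono b y Y : (forall n, 0 <= b n) -> ex_pseries b y -> ex_pseries b Y ->
  0 <= y <= Y -> 0 <= PSeries b y <= PSeries b Y.
Proof.
  intros Hb Ey EY Hy. split.
  - assert (Hl := is_lim_seq_le (fun _ => 0) _ 0 _ (fun N => sum_nonneg _ N
       (fun k => Rmult_le_pos _ _ (Hb k) (pow_le _ k (proj1 Hy)))) (is_lim_seq_const 0) (ps_lim b y Ey)).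
    simpl in Hl; exact Hl.
  - assert (Hl : Rbar_le (PSeries b y) (PSeries b Y)).
    { apply (is_lim_seq_le _ _ _ _ ) with (2 := ps_lim b y Ey) (3 := ps_lim b Y EY).
      intros N. apply sum_Rle. intros k _. apply Rmult_le_compat_l; auto.
      apply pow_incr; lra. }
    simpl in Hl; exact Hl.
Qed.

Lemma ex_ps_any a x : CV_radius a = p_infty -> ex_pseries a x.
Proof. intros H. apply CV_radius_inside. rewrite H. simpl; auto. Qed.

Lemma G_tail al N y Y : 0 < al -> 0 <= y <= Y ->
  0 <= G al y - sum_f_R0 (fun k => Ac al k * y ^ k) N <=
       G al Y - sum_f_R0 (fun k => Ac al k * Y ^ k) N.
Proof.
  intros Hal Hy. unfold G.
  rewrite (PSeries_decr_n (Ac al) N y) by (apply ex_ps_any, Ac_rad; auto).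
  rewrite (PSeries_decr_n (Ac al) N Y) by (apply ex_ps_any, Ac_rad; auto).
  assert (E : forall z, ex_pseries (PS_decr_n (Ac al) (S N)) z).
  { intros z. apply ex_pseries_decr_n.
    - destruct (Req_dec z 0) as [->|Hz]; [left; reflexivity| right; exists (/ z)].
      unfold mult, one; simpl. field; auto.
    - apply ex_ps_any, Ac_rad; auto. }
  assert (M := ps_mono (PS_decr_n (Ac al) (S N)) y Y
     (fun n => Rlt_le _ _ (Ac_pos al _ Hal)) (E y) (E Y) Hy).
  assert (0 <= y ^ S N <= Y ^ S N) by (split; [apply pow_le; lra| apply pow_incr; lra]).
  split; ring_simplify; nra.
Qed.

Fixpoint P (T : R) (k : nat) (x : R) : R :=
  match k with
  | O => x
  | S m => (x * (T ^ 2 - x ^ 2) ^ (S m) + 2 * INR (S m) * T ^ 2 * P T m x) / (2 * INR (S m) + 1)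
  end.

Lemma P_der T k x : is_derive (P T k) x ((T ^ 2 - x ^ 2) ^ k).
Proof.
  induction k as [|m IH].
  - simpl. auto_derive; auto.
  - simpl P.
    assert (H2 : 0 < 2 * INR (S m) + 1) by (pose proof (INR_S_pos m); lra).
    auto_derive.
    + exists ((T ^ 2 - x ^ 2) ^ m); exact IH.
    + replace (Derive (fun x0 => P T m x0) x) with ((T ^ 2 - x ^ 2) ^ m) by (symmetry; apply is_derive_unique; exact IH).
      destruct m as [|m'].
      * simpl. field.
      * simpl pred. pose proof (pos_INR m'). rewrite S_INR in H2. simpl INR in *.
        change (match m' with 0%nat => 1 | S _ => INR m' + 1 end) with (INR (S m')) in *.
        replace (T * (T * 1) + - (x * (x * 1))) with (T ^ 2 - x ^ 2) by ring.
        set (u := T ^ 2 - x ^ 2). rewrite <- !tech_pow_Rmult. rewrite S_INR in *.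
        assert (Hu : T * (T * 1) = u + x * x) by (unfold u; ring). rewrite Hu. clearbody u. field. lra.
Qed.

Lemma P_S T m x : P T (S m) x = (x * (T ^ 2 - x ^ 2) ^ (S m) + 2 * INR (S m) * T ^ 2 * P T m x) / (2 * INR (S m) + 1).
Proof. reflexivity. Qed.

Lemma P_odd T k x : P T k (- x) = - P T k x.
Proof.
  induction k as [|m IH]; [simpl; ring|]. rewrite !P_S.
  rewrite IH. replace ((- x) ^ 2) with (x ^ 2) by ring.
  pose proof (INR_S_pos m). field. lra.
Qed.

Lemma P_T T m : P T (S m) T = 2 * INR (S m) * T ^ 2 * P T m T / (2 * INR (S m) + 1).
Proof.
  rewrite P_S. replace (T ^ 2 - T ^ 2) with 0 by ring. rewrite pow_i by lia. f_equal. ring.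
Qed.

Lemma term_id al T k :
  Ac al k * (2 * P T k T) = 2 * T * ((4 * al * T ^ 2) ^ k / INR (fact (2 * k + 1))).
Proof.
  induction k as [|m IH].
  - unfold Ac. simpl. field.
  - rewrite Ac_S, P_T.
    replace (2 * S m + 1)%nat with (S (S (2 * m + 1))) by lia.
    rewrite (fact_simpl (S (2 * m + 1))), (fact_simpl (2 * m + 1)), !mult_INR.
    pose proof (INR_S_pos m). pose proof (fact_pos' (2 * m + 1)).
    transitivity (al / INR (S m) ^ 2 * (2 * INR (S m) * T ^ 2) / (2 * INR (S m) + 1) * (Ac al m * (2 * P T m T))).
    { field. lra. }
    rewrite IH. rewrite <- (tech_pow_Rmult (4 * al * T ^ 2) m).
    set (F := INR (fact (2 * m + 1))) in *.
    replace (INR (S (S (2 * m + 1)))) with (2 * INR m + 3) by (rewrite !S_INR, plus_INR, mult_INR; simpl; ring).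
    replace (INR (S (2 * m + 1))) with (2 * INR m + 2) by (rewrite !S_INR, plus_INR, mult_INR; simpl; ring).
    rewrite S_INR in *.
    field. repeat split; lra.
Qed.

Definition SN al N y := sum_f_R0 (fun k => Ac al k * y ^ k) N.

Lemma Q_der al T N x :
  is_derive (fun x => sum_f_R0 (fun k => Ac al k * P T k x) N) x (SN al N (T ^ 2 - x ^ 2)).
Proof.
  unfold SN. induction N as [|N IH].
  - cbn [sum_f_R0]. apply is_derive_scal, P_der.
  - cbn [sum_f_R0]. apply (is_derive_plus (fun x => sum_f_R0 (fun k => Ac al k * P T k x) N)
               (fun x => Ac al (S N) * P T (S N) x)); [exact IH|].
    apply is_derive_scal, P_der.
Qed.

Lemma SN_cont al N T x : continuous (fun x => SN al N (T ^ 2 - x ^ 2)) x.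
Proof.
  unfold SN. induction N as [|N IH].
  - cbn [sum_f_R0]. apply (ex_derive_continuous (K := R_AbsRing) (V := R_NormedModule) (fun x => Ac al 0 * (T ^ 2 - x ^ 2) ^ 0)). auto_derive. auto.
  - cbn [sum_f_R0]. apply (continuous_plus (fun x => sum_f_R0 (fun k => Ac al k * (T ^ 2 - x ^ 2) ^ k) N)
               (fun x => Ac al (S N) * (T ^ 2 - x ^ 2) ^ S N)); [exact IH|].
    apply (ex_derive_continuous (K := R_AbsRing) (V := R_NormedModule) (fun x => Ac al (S N) * (T ^ 2 - x ^ 2) ^ S N)). auto_derive. auto.
Qed.

Definition oc (n : nat) : R := / INR (fact (2 * n + 1)).

Lemma SN_int al T N : 0 <= T ->
  is_RInt (fun x => SN al N (T ^ 2 - x ^ 2)) (- T) T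
    (2 * T * sum_f_R0 (fun k => oc k * (4 * al * T ^ 2) ^ k) N).
Proof.
  intros HT.
  replace (2 * T * sum_f_R0 (fun k => oc k * (4 * al * T ^ 2) ^ k) N) with
    (minus (sum_f_R0 (fun k => Ac al k * P T k T) N) (sum_f_R0 (fun k => Ac al k * P T k (- T)) N)).
  - apply (is_RInt_derive (fun x => sum_f_R0 (fun k => Ac al k * P T k x) N)).
    + intros x _. apply Q_der.
    + intros x _. apply SN_cont.
  - unfold minus, plus, opp; simpl.
    induction N as [|N IH].
    + cbn [sum_f_R0]. rewrite P_odd. pose proof (term_id al T 0). unfold oc. simpl in *. lra.
    + cbn [sum_f_R0]. rewrite P_odd. pose proof (term_id al T (S N)). unfold oc in *. 
      rewrite Rmult_plus_distr_l, <- IH. replace (T * (T * 1)) with (T ^ 2) by ring. lra.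
Qed.

Lemma G_cont al y : 0 < al -> continuous (G al) y.
Proof. intros H. apply (ex_derive_continuous (K := R_AbsRing) (V := R_NormedModule)). exists (G1 al y). apply G_der; auto. Qed.

Lemma Gc_cont al T x : 0 < al -> continuous (fun x => G al (T ^ 2 - x ^ 2)) x.
Proof.
  intros H. apply (continuous_comp (fun x => T ^ 2 - x ^ 2) (G al)).
  - apply (ex_derive_continuous (K := R_AbsRing) (V := R_NormedModule) (fun x => T ^ 2 - x ^ 2)). auto_derive. auto.
  - apply G_cont; auto.
Qed.

Lemma oc_rad : CV_radius oc = p_infty.
Proof.
  apply rad_inf with (M := 1).
  - intros n. unfold oc. apply Rinv_neq_0_compat. apply INR_fact_neq_0.
  - intros n. unfold oc.
    replace (2 * S n + 1)%nat with (S (S (2 * n + 1))) by lia.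
    rewrite (fact_simpl (S (2 * n + 1))), (fact_simpl (2 * n + 1)), !mult_INR.
    pose proof (fact_pos' (2 * n + 1)). set (F := INR (fact (2 * n + 1))) in *.
    replace (INR (S (S (2 * n + 1)))) with (2 * INR n + 3) by (rewrite !S_INR, plus_INR, mult_INR; simpl; ring).
    replace (INR (S (2 * n + 1))) with (2 * INR n + 2) by (rewrite !S_INR, plus_INR, mult_INR; simpl; ring).
    pose proof (pos_INR n). rewrite S_INR.
    replace (/ ((2 * INR n + 3) * ((2 * INR n + 2) * F)) / / F) with (/ ((2 * INR n + 3) * (2 * INR n + 2))) by (field; repeat split; lra).
    rewrite Rabs_right.
    2:{ apply Rle_ge, Rlt_le, Rinv_0_lt_compat. nra. }
    rewrite Rmult_1_l. apply Rinv_le_contravar; nra.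
Qed.

Lemma int_G al T : 0 < al -> 0 <= T ->
  is_RInt (fun x => G al (T ^ 2 - x ^ 2)) (- T) T (2 * T * PSeries oc (4 * al * T ^ 2)).
Proof.
  intros Hal HT.
  set (f := fun x => G al (T ^ 2 - x ^ 2)).
  assert (Ef : ex_RInt f (- T) T).
  { apply (ex_RInt_continuous (V := R_CompleteNormedModule)). intros z _. apply Gc_cont; auto. }
  set (I := RInt f (- T) T).
  set (z := 4 * al * T ^ 2).
  set (J := fun N => 2 * T * sum_f_R0 (fun k => oc k * z ^ k) N).
  assert (L1 : is_lim_seq J (2 * T * PSeries oc z)).
  { apply (is_lim_seq_mult' (fun _ => 2 * T)). apply is_lim_seq_const.
    apply ps_lim, ex_ps_any, oc_rad. }
  set (tl := fun N => G al (T ^ 2) - SN al N (T ^ 2)).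
  assert (Lt : is_lim_seq tl 0).
  { replace 0 with (G al (T ^ 2) - G al (T ^ 2)) by ring.
    apply (is_lim_seq_minus' (fun _ => G al (T ^ 2))). apply is_lim_seq_const.
    apply ps_lim, ex_ps_any, Ac_rad; auto. }
  assert (Bd : forall N, Rabs (J N - I) <= 2 * T * tl N).
  { intros N.
    assert (HS := SN_int al T N HT). fold z in HS.
    assert (Hm := is_RInt_minus _ _ _ _ _ _ HS (RInt_correct _ _ _ Ef)).
    assert (Em : ex_RInt (fun y => minus (SN al N (T ^ 2 - y ^ 2)) (f y)) (- T) T)
      by (eexists; exact Hm).
    apply (is_RInt_unique (V := R_CompleteNormedModule)) in Hm. cbv beta in Hm.
    assert (Eq : J N - I = RInt (fun y => minus (SN al N (T ^ 2 - y ^ 2)) (f y)) (- T) T).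
    { etransitivity; [| symmetry; apply Hm]. reflexivity. }
    rewrite Eq.
    replace (2 * T * tl N) with ((T - - T) * tl N) by ring.
    apply abs_RInt_le_const; [lra | exact Em |].
    intros t Ht. change (Rabs (SN al N (T ^ 2 - t ^ 2) - f t) <= tl N). unfold f.
    assert (0 <= T ^ 2 - t ^ 2 <= T ^ 2) by (split; nra).
    pose proof (G_tail al N _ _ Hal H). unfold tl, SN, G in *.
    rewrite Rabs_left1; lra. }
  assert (L2 : is_lim_seq J I).
  { apply is_lim_seq_le_le with (u := fun N => I - 2 * T * tl N) (w := fun N => I + 2 * T * tl N).
    - intros N. specialize (Bd N). apply Rabs_le_between' in Bd. lra.
    - replace (Finite I) with (Finite (I - 2 * T * 0)) by (f_equal; ring).
      apply (is_lim_seq_minus' (fun _ => I)); [apply is_lim_seq_const|].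
      apply (is_lim_seq_mult' (fun _ => 2 * T)); [apply is_lim_seq_const| exact Lt].
    - replace (Finite I) with (Finite (I + 2 * T * 0)) by (f_equal; ring).
      apply (is_lim_seq_plus' (fun _ => I)); [apply is_lim_seq_const|].
      apply (is_lim_seq_mult' (fun _ => 2 * T)); [apply is_lim_seq_const| exact Lt]. }
  apply is_lim_seq_unique in L1. apply is_lim_seq_unique in L2.
  rewrite L1 in L2. injection L2 as L2. rewrite L2.
  apply (RInt_correct (V := R_CompleteNormedModule)); exact Ef.
Qed.

Definition ec (n : nat) : R := / INR (fact (2 * n)).

Lemma ec_rad : CV_radius ec = p_infty.
Proof.
  apply rad_inf with (M := 1).
  - intros n. unfold ec. apply Rinv_neq_0_compat. apply INR_fact_neq_0.
  - intros n. unfold ec.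
    replace (2 * S n)%nat with (S (S (2 * n))) by lia.
    rewrite (fact_simpl (S (2 * n))), (fact_simpl (2 * n)), !mult_INR.
    pose proof (fact_pos' (2 * n)). set (F := INR (fact (2 * n))) in *.
    replace (INR (S (S (2 * n)))) with (2 * INR n + 2) by (rewrite !S_INR, mult_INR; simpl; ring).
    replace (INR (S (2 * n))) with (2 * INR n + 1) by (rewrite !S_INR, mult_INR; simpl; ring).
    pose proof (pos_INR n). rewrite S_INR.
    replace (/ ((2 * INR n + 2) * ((2 * INR n + 1) * F)) / / F) with (/ ((2 * INR n + 2) * (2 * INR n + 1))) by (field; repeat split; lra).
    rewrite Rabs_right.
    2:{ apply Rle_ge, Rlt_le, Rinv_0_lt_compat. nra. }
    rewrite Rmult_1_l. apply Rinv_le_contravar; nra.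
Qed.

Lemma sinh_ser w : sinh w = w * PSeries oc (w ^ 2).
Proof.
  unfold sinh. rewrite !exp_Reals.
  rewrite !(PSeries_odd_even (fun n => / INR (fact n))).
  - replace ((- w) ^ 2) with (w ^ 2) by ring.
    change (fun n => / INR (fact (2 * n + 1))) with oc. field.
  - apply (ex_ps_any ec), ec_rad.
  - apply (ex_ps_any oc), oc_rad.
  - apply (ex_ps_any ec), ec_rad.
  - apply (ex_ps_any oc), oc_rad.
Qed.

Lemma I0_eq al b Y : 0 < al -> 0 <= Y -> b ^ 2 = 4 * al ->
  I0 (b * sqrt Y) = G al Y.
Proof.
  intros Hal HY Hb.
  assert (Hc : Un_cv (I0_partial (b * sqrt Y)) (G al Y)).
  { apply is_lim_seq_Reals.
    apply is_lim_seq_ext with (u := fun N => sum_f_R0 (fun k => Ac al k * Y ^ k) N).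
    - intros n. unfold I0_partial. apply sum_eq. intros k _.
      rewrite pow_mult.
      replace ((b * sqrt Y / 2) ^ 2) with (al * Y).
      + unfold Ac. rewrite Rpow_mult_distr. field. apply INR_fact_neq_0.
      + replace ((b * sqrt Y / 2) ^ 2) with (b ^ 2 * (sqrt Y * sqrt Y) / 4) by field.
        rewrite sqrt_sqrt by lra. rewrite Hb. field.
    - apply ps_lim, ex_ps_any, Ac_rad; auto. }
  unfold I0.
  assert (Ex : exists l, Un_cv (I0_partial (b * sqrt Y)) l) by (exists (G al Y); exact Hc).
  pose proof (epsilon_spec (inhabits 0) _ Ex) as Hs.
  eapply UL_sequence; [exact Hs | exact Hc].
Qed.

Definition q (c lam x t : R) : R :=
  lam * G (lam ^ 2 / (4 * c ^ 2)) (c ^ 2 * t ^ 2 - x ^ 2) / (2 * c * sinh (lam * t)).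

Lemma p_eq c lam x t : 0 < c -> 0 < lam -> Rabs x <= c * t -> p c lam x t = q c lam x t.
Proof.
  intros Hc Hl Hx. unfold p, q.
  rewrite (I0_eq (lam ^ 2 / (4 * c ^ 2))).
  - reflexivity.
  - apply Rdiv_lt_0_compat; [apply pow_lt; auto| nra].
  - assert (0 <= Rabs x) by apply Rabs_pos.
    assert (x ^ 2 = Rabs x ^ 2) by (unfold Rabs; destruct Rcase_abs; ring).
    nra.
  - field. lra.
Qed.

Lemma Der_G al z : 0 < al -> Derive (fun y => G al y) z = G1 al z.
Proof. intros H. apply is_derive_unique. apply G_der; auto. Qed.
Lemma Der_G1 al z : 0 < al -> Derive (fun y => G1 al y) z = G2 al z.
Proof. intros H. apply is_derive_unique. apply G1_der; auto. Qed.
Lemma Der_sinh z : Derive (fun y => sinh y) z = cosh z.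
Proof. apply is_derive_unique. apply is_derive_Reals. apply derivable_pt_lim_sinh. Qed.
Lemma Der_cosh z : Derive (fun y => cosh y) z = sinh z.
Proof. apply is_derive_unique. apply is_derive_Reals. apply derivable_pt_lim_cosh. Qed.
Lemma ex_G al z : 0 < al -> ex_derive (fun y => G al y) z.
Proof. intros H. exists (G1 al z). apply G_der; auto. Qed.
Lemma ex_G1 al z : 0 < al -> ex_derive (fun y => G1 al y) z.
Proof. intros H. exists (G2 al z). apply G1_der; auto. Qed.
Lemma ex_sinh z : ex_derive (fun y => sinh y) z.
Proof. exists (cosh z). apply is_derive_Reals. apply derivable_pt_lim_sinh. Qed.
Lemma ex_cosh z : ex_derive (fun y => cosh y) z.
Proof. exists (sinh z). apply is_derive_Reals. apply derivable_pt_lim_cosh. Qed.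


Definition pt_ c lam al x s := lam / (2 * c) * (2 * c ^ 2 * s * G1 al (c ^ 2 * s ^ 2 - x ^ 2) * sinh (lam * s)
   - lam * cosh (lam * s) * G al (c ^ 2 * s ^ 2 - x ^ 2)) / (sinh (lam * s)) ^ 2.

Lemma q_dt c lam al x t : 0 < c -> 0 < al -> sinh (lam * t) <> 0 ->
  is_derive (fun s => lam * G al (c ^ 2 * s ^ 2 - x ^ 2) / (2 * c * sinh (lam * s))) t (pt_ c lam al x t).
Proof.
  intros Hc Hal Hs. unfold pt_.
  auto_derive.
  all: try (repeat split; auto using ex_G, ex_G1; apply Rmult_integral_contrapositive; split; auto; lra).
  - set (Y := c * (c * 1) * (t * (t * 1)) + - (x * (x * 1))).
    assert (HY : c ^ 2 * t ^ 2 - x ^ 2 = Y) by (unfold Y; ring).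
    rewrite HY, Der_G by auto. field. split; auto; lra.
Qed.

Definition ptt_ c lam al x s :=
  let Y := c ^ 2 * s ^ 2 - x ^ 2 in
  let S := sinh (lam * s) in let C := cosh (lam * s) in
  lam / (2 * c) * ((2 * c ^ 2 * G1 al Y * S + 4 * c ^ 4 * s ^ 2 * G2 al Y * S - lam ^ 2 * S * G al Y) * S
     - 2 * lam * C * (2 * c ^ 2 * s * G1 al Y * S - lam * C * G al Y)) / S ^ 3.

Lemma pt_dt c lam al x t : 0 < c -> 0 < al -> sinh (lam * t) <> 0 ->
  is_derive (fun s => pt_ c lam al x s) t (ptt_ c lam al x t).
Proof.
  intros Hc Hal Hs. unfold pt_, ptt_.
  auto_derive.
  - repeat split; auto using ex_G, ex_G1.
  - set (Y := c * (c * 1) * (t * (t * 1)) + - (x * (x * 1))).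
    assert (HY : c ^ 2 * t ^ 2 - x ^ 2 = Y) by (unfold Y; ring).
    rewrite HY, Der_G, Der_G1 by auto. field. split; auto; lra.
Qed.

Definition px_ c lam al x s := lam / (2 * c) * (- 2 * x * G1 al (c ^ 2 * s ^ 2 - x ^ 2)) / sinh (lam * s).
Definition pxx_ c lam al x s := lam / (2 * c) * (- 2 * G1 al (c ^ 2 * s ^ 2 - x ^ 2)
   + 4 * x ^ 2 * G2 al (c ^ 2 * s ^ 2 - x ^ 2)) / sinh (lam * s).

Lemma q_dx c lam al x t : 0 < c -> 0 < al -> sinh (lam * t) <> 0 ->
  is_derive (fun y => lam * G al (c ^ 2 * t ^ 2 - y ^ 2) / (2 * c * sinh (lam * t))) x (px_ c lam al x t).
Proof.
  intros Hc Hal Hs. unfold px_.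
  auto_derive.
  all: try (repeat split; auto using ex_G, ex_G1; apply Rmult_integral_contrapositive; split; auto; lra).
  - set (Y := c * (c * 1) * (t * (t * 1)) + - (x * (x * 1))).
    assert (HY : c ^ 2 * t ^ 2 - x ^ 2 = Y) by (unfold Y; ring).
    rewrite HY, Der_G by auto. field. split; auto; lra.
Qed.

Lemma px_dx c lam al x t : 0 < c -> 0 < al -> sinh (lam * t) <> 0 ->
  is_derive (fun y => px_ c lam al y t) x (pxx_ c lam al x t).
Proof.
  intros Hc Hal Hs. unfold px_, pxx_.
  auto_derive.
  - repeat split; auto using ex_G1.
  - set (Y := c * (c * 1) * (t * (t * 1)) + - (x * (x * 1))).
    assert (HY : c ^ 2 * t ^ 2 - x ^ 2 = Y) by (unfold Y; ring).
    rewrite HY, Der_G1 by auto. field. split; auto; lra.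
Qed.

Lemma pde c lam x t : 0 < c -> 0 < lam -> sinh (lam * t) <> 0 ->
  let al := lam ^ 2 / (4 * c ^ 2) in
  ptt_ c lam al x t + 2 * lam * coth (lam * t) * pt_ c lam al x t = c ^ 2 * pxx_ c lam al x t.
Proof.
  intros Hc Hl Hs al.
  assert (Hal : 0 < al) by (unfold al; apply Rdiv_lt_0_compat; [apply pow_lt; auto| nra]).
  unfold ptt_, pt_, pxx_, coth. cbv zeta.
  pose proof (G_ode al (c ^ 2 * t ^ 2 - x ^ 2) Hal) as Ho.
  set (Y := c ^ 2 * t ^ 2 - x ^ 2) in *.
  replace (G1 al Y) with (al * G al Y - Y * G2 al Y) by lra.
  unfold Y, al. field. split; auto; lra.
Qed.

Lemma sinh_pos z : 0 < z -> 0 < sinh z.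
Proof. intros H. rewrite <- sinh_0. apply sinh_lt; auto. Qed.

Theorem mainTheorem3 (c lam : R) (hc : 0 < c) (hlam : 0 < lam) :
  (forall t : R, 0 < t ->
     (forall x : R, - (c * t) < x < c * t -> 0 <= p c lam x t) /\
     exists pr : Riemann_integrable (fun x => p c lam x t) (- (c * t)) (c * t),
       RiemannInt pr = 1) /\
  exists pt ptt px pxx : R -> R -> R,
    forall t x : R, 0 < t -> Rabs x < c * t ->
      derivable_pt_lim (fun s => p c lam x s) t (pt x t) /\
      derivable_pt_lim (fun s => pt x s) t (ptt x t) /\
      derivable_pt_lim (fun y => p c lam y t) x (px x t) /\
      derivable_pt_lim (fun y => px y t) x (pxx x t) /\
      ptt x t + 2 * lam * coth (lam * t) * pt x t = c ^ 2 * pxx x t.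
Proof.
  set (al := lam ^ 2 / (4 * c ^ 2)).
  assert (Hal : 0 < al) by (unfold al; apply Rdiv_lt_0_compat; [apply pow_lt; auto| nra]).
  split.
  - intros t Ht.
    assert (HS : 0 < sinh (lam * t)) by (apply sinh_pos; nra).
    split.
    + intros x Hx. rewrite p_eq; auto.
      2:{ unfold Rabs; destruct Rcase_abs; lra. }
      unfold q. fold al.
      assert (0 <= G al (c ^ 2 * t ^ 2 - x ^ 2)).
      { assert (HY : 0 <= c ^ 2 * t ^ 2 - x ^ 2) by nra.
        assert (E : ex_pseries (Ac al) (c ^ 2 * t ^ 2 - x ^ 2)) by (apply ex_ps_any, Ac_rad; auto).
        destruct (ps_mono (Ac al) _ _ (fun n => Rlt_le _ _ (Ac_pos al n Hal)) E E (conj HY (Rle_refl _))) as [H _].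
        exact H. }
      apply Rdiv_le_0_compat; [nra|]. nra.
    + set (T := c * t).
      assert (HT : 0 <= T) by (unfold T; nra).
      pose proof (int_G al T Hal HT) as HI.
      apply (is_RInt_scal _ _ _ (lam / (2 * c * sinh (lam * t)))) in HI.
      assert (HI2 : is_RInt (fun x => p c lam x t) (- T) T
                 (lam / (2 * c * sinh (lam * t)) * (2 * T * PSeries oc (4 * al * T ^ 2)))).
      { apply (is_RInt_ext (V := R_NormedModule)) with (2 := HI).
        intros x Hx. rewrite Rmin_left in Hx by lra. rewrite Rmax_right in Hx by lra.
        rewrite p_eq; auto.
        2:{ unfold Rabs; destruct Rcase_abs; unfold T in Hx; lra. }
        unfold q, scal; simpl; unfold mult; simpl.
        replace (lam * (lam * 1) / (4 * (c * (c * 1)))) with al by (unfold al; field; lra).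
        replace (T * (T * 1) - x * (x * 1)) with (c * (c * 1) * (t * (t * 1)) - x * (x * 1)) by (unfold T; ring).
        field. split; lra. }
      assert (Ex : ex_RInt (fun x => p c lam x t) (- T) T) by (eexists; exact HI2).
      exists (ex_RInt_Reals_0 _ _ _ Ex).
      rewrite <- RInt_Reals.
      rewrite (is_RInt_unique (V := R_CompleteNormedModule) _ _ _ _ HI2).
      replace (4 * al * T ^ 2) with ((lam * t) ^ 2) by (unfold al, T; field; lra).
      pose proof (sinh_ser (lam * t)) as Hs.
      unfold T. rewrite Hs in *. field. split; [|lra].
      intro H0. rewrite H0 in HS. lra.
  - exists (fun x s => pt_ c lam al x s), (fun x s => ptt_ c lam al x s),
           (fun x s => px_ c lam al x s), (fun x s => pxx_ c lam al x s).
    intros t x Ht Hx.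
    assert (HS : 0 < sinh (lam * t)) by (apply sinh_pos; nra).
    assert (HS' : sinh (lam * t) <> 0) by lra.
    repeat split.
    + apply is_derive_Reals.
      apply (is_derive_ext_loc (fun s => q c lam x s)).
      * apply (locally_interval _ t (Rabs x / c) p_infty).
        -- simpl. apply Rmult_lt_reg_r with c; auto. unfold Rdiv. rewrite Rmult_assoc, Rinv_l by lra. lra.
        -- simpl; auto.
        -- intros y Hy _. simpl in Hy. symmetry. apply p_eq; auto.
           assert (Rabs x < y * c).
           { apply Rmult_lt_reg_r with (/ c). apply Rinv_0_lt_compat; auto.
             rewrite Rmult_assoc, Rinv_r by lra. lra. }
           lra.
      * apply q_dt; auto.
    + apply is_derive_Reals. apply pt_dt; auto.
    + apply is_derive_Reals.
      apply (is_derive_ext_loc (fun y => q c lam y t)).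
      * apply (locally_interval _ x (- (c * t)) (c * t)).
        -- simpl. apply Rabs_def2 in Hx. lra.
        -- simpl. apply Rabs_def2 in Hx. lra.
        -- intros y H1 H2. simpl in H1, H2. symmetry. apply p_eq; auto.
           unfold Rabs; destruct Rcase_abs; lra.
      * apply q_dx; auto.
    + apply is_derive_Reals. apply px_dx; auto.
    + apply pde; auto.
Qed.
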